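(* For each notion of guarding $\mathfrak{g}$, there is a natural isomorphism \[ \theta : H^{\mathfrak{g}} \circ \mathbb{G}^{\mathfrak{g}} \; \cong \; \mathbb{H} \circ H^{\mathfrak{g}} \] such that, for all $\sigma$-structures $\mathcal{A}$ (omitting $\mathfrak{g}$), $\varepsilon_{H\mathcal{A}}\circ\theta_{\mathcal{A}} = H\varepsilon_{\mathcal{A}}$ and $\delta_{H\mathcal{A}}\circ\theta_{\mathcal{A}} = \mathbb{H}\theta_{\mathcal{A}}\circ\theta_{\mathbb{G}\mathcal{A}}\circ H\delta_{\mathcal{A}}$. Thus $\theta$ forms an Eilenberg-Moore law.
   Context: $\mathfrak{g}$ is atom, loose or clique guarding. $H^{\mathfrak{g}}$ is the functor from $\sigma$-structures to hypergraphs sending $\mathcal{A}$ to $(A,E)$ with $E$ the set of $\mathfrak{g}$-guarded subsets of $\mathcal{A}$. $\mathbb{G}^{\mathfrak{g}}$ is the guarded comonad on $\sigma$-structures and $\mathbb{H}$ the hypergraph comonad; both are built from equivalence classes $[p,a]$ of focussed plays $\langle p,a\rangle$ ($p$ a non-empty list of guarded sets, resp. hyperedges, $a$ in the last element), where $\langle p,a\rangle\sim\langle q,a'\rangle$ iff $a=a'$, $p\sqcap q$ non-empty, and $a$ lies in the last element of every play on the prefix-order paths from $p\sqcap q$ to $p$ and $q$. In $\mathbb{G}\mathcal{A}$, $R^{\mathbb{G}\mathcal{A}}=\{([p,a_1],\ldots,[p,a_r])\mid R^{\mathcal{A}}(a_1,\ldots,a_r)\}$; in $\mathbb{H}(V,E)$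 the hyperedges are $\{[p,a]\mid a\in U\}$ with $U\in E$ the last element of $p$. In both, $\varepsilon([p,a])=a$ and $\delta([[U_1,\ldots,U_n],a])=[[T_1,\ldots,T_n],[[U_1,\ldots,U_n],a]]$ with $T_j=\{[[U_1,\ldots,U_j],b]\mid b\in U_j\}$. *)

(* Defs.v *)
From HB Require Import structures.
From mathcomp Require Import all_boot.
From mathcomp Require Import boolp classical_sets functions cardinality.
From Stdlib Require List.

Set Implicit Arguments.
Unset Strict Implicit.
Unset Printing Implicit Defensive.

Local Open Scope classical_set_scope.

Definition play (V : Type) := (seq (set V) * V)%type.

Definition prefix {T : Type} (c p : seq T) : Prop := exists s, p = c ++ s.

Definition is_meet {T : Type} (c p q : seq T) : Prop :=
  [/\ prefix c p, prefix c q & forall d, prefix d p -> prefix d q -> prefix d c].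

Definition play_equiv {V : Type} (x y : play V) : Prop :=
  x.2 = y.2 /\
  exists c, [/\ is_meet c x.1 y.1, c <> [::],
    (forall r, prefix c r -> prefix r x.1 -> last set0 r x.2) &
    (forall r, prefix c r -> prefix r y.1 -> last set0 r y.2)].

Definition focussed {V : Type} (E : set (set V)) (x : play V) : Prop :=
  [/\ x.1 <> [::], (forall U, List.In U x.1 -> E U) & last set0 x.1 x.2].

Definition cls {V : Type} (E : set (set V)) (x : play V) : set (play V) :=
  [set y | focussed E y /\ play_equiv x y].

Definition is_cls {V : Type} (E : set (set V)) (S : set (play V)) : Prop :=
  exists x, focussed E x /\ S = cls E x.

Definition Cls {V : Type} (E : set (set V)) : Type := {S : set (play V) | is_cls E S}.

Definition mkCls {V : Type} (E : set (set V)) (x : play V) (hx : focussed E x) : Cls E :=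
  exist _ (cls E x) (ex_intro _ x (conj hx erefl)).

Definition rep {V : Type} {E : set (set V)} (S : Cls E) : play V :=
  proj1_sig (cid (proj2_sig S)).

Lemma rep_spec {V : Type} {E : set (set V)} (S : Cls E) :
  focussed E (rep S) /\ proj1_sig S = cls E (rep S).
Proof. by rewrite /rep; case: cid. Qed.

Definition eps {V : Type} {E : set (set V)} (S : Cls E) : V := (rep S).2.

Definition clsE {V : Type} (E : set (set V)) (x : play V) (d : Cls E) : Cls E :=
  match pselect (focussed E x) with left h => mkCls h | right _ => d end.

Definition mapplay {V W : Type} (h : V -> W) (x : play V) : play W :=
  (map (fun U => h @` U) x.1, h x.2).

Lemma focussed_map {V W : Type} (E : set (set V)) (E' : set (set W)) (h : V -> W) :
  (forall e, E e -> E' (h @` e)) ->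
  forall x, focussed E x -> focussed E' (mapplay h x).
Proof.
move=> hE [p a] [/= hp hin hl]; split => /=.
- by case: p hp {hin hl}.
- move=> U /List.in_map_iff [U0 [<- hU0]]; exact: hE (hin _ hU0).
- have -> : (set0 : set W) = h @` set0 by rewrite image_set0.
  by rewrite (last_map (fun U => h @` U)); exists a.
Qed.

Definition cls_map {V W : Type} {E : set (set V)} {E' : set (set W)} {h : V -> W}
  (hE : forall e, E e -> E' (h @` e)) (S : Cls E) : Cls E' :=
  mkCls (focussed_map hE (rep_spec S).1).

Definition pstep {V : Type} (E : set (set V)) (p : seq (set V)) : set (Cls E) :=
  [set c | exists b, last set0 p b /\ proj1_sig c = cls E (p, b)].
Arguments pstep {V} E p.

Definition deltaplay {V : Type} {E : set (set V)} (S : Cls E) : play (Cls E) :=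
  ([seq pstep E (take j (rep S).1) | j <- iota 1 (size (rep S).1)], S).

Record hypergraph := HGraph { hv : Type; he : set (set hv) }.
Arguments he : clear implicits.

Definition hmor (G1 G2 : hypergraph) (h : hv G1 -> hv G2) : Prop :=
  forall e, he G1 e -> he G2 (h @` e).
Arguments hmor : clear implicits.

Definition hedgeH {V : Type} (E : set (set V)) : set (set (Cls E)) :=
  [set T | exists p, [/\ p <> [::], (forall U, List.In U p -> E U) & T = pstep E p]].
Arguments hedgeH {V} E.

Definition HH (G : hypergraph) : hypergraph := @HGraph (Cls (he G)) (hedgeH (he G)).

Definition Hmap (G1 G2 : hypergraph) (h : hv G1 -> hv G2) (hh : hmor G1 G2 h) :
  hv (HH G1) -> hv (HH G2) := cls_map hh.

Lemma pstep_focussed {V : Type} {E : set (set V)} (S : Cls E) :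
  focussed (hedgeH E) ([:: pstep E (rep S).1], S).
Proof.
have [[hp hin hl] hS] := rep_spec S.
split => //=.
- move=> U [<-|//]; by exists (rep S).1.
- exists (rep S).2; split => //; rewrite hS; by case: (rep S).
Qed.

Definition deltaH {V : Type} {E : set (set V)} (S : Cls E) : Cls (hedgeH E) :=
  clsE (deltaplay S) (mkCls (pstep_focussed S)).

Record signature := Signature { sym : Type; ar : sym -> nat }.

Record sstruct (s : signature) := MkStruct {
  car : Type;
  rel : forall R : sym s, ('I_(ar R) -> car) -> Prop }.

Definition hom (s : signature) (A B : sstruct s) (f : car A -> car B) : Prop :=
  forall (R : sym s) (t : 'I_(ar R) -> car A), rel t -> rel (f \o t).

Inductive guarding := Atom | Loose | Clique.

Definition atom_guarded (s : signature) (A : sstruct s) (S : set (car A)) : Prop :=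
  (exists a, S = [set a]) \/
  exists (R : sym s) (t : 'I_(ar R) -> car A), rel t /\ S = range t.

Definition loose_guarded (s : signature) (A : sstruct s) (S : set (car A)) : Prop :=
  exists k (g : 'I_k -> set (car A)),
    [/\ forall i, atom_guarded (g i), forall i, g i `<=` S &
        forall a b, S a -> S b -> exists i, g i a /\ g i b].

Definition clique_guarded (s : signature) (A : sstruct s) (S : set (car A)) : Prop :=
  finite_set S /\
  forall a b, S a -> S b -> exists G, atom_guarded G /\ G a /\ G b.

Definition guarded (g : guarding) (s : signature) (A : sstruct s) : set (set (car A)) :=
  match g with
  | Atom => @atom_guarded s A
  | Loose => @loose_guarded s A
  | Clique => @clique_guarded s A
  end.
Arguments guarded g {s} A.

(* the functor H^g on objects; on morphisms it is the identity on maps *)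
Definition Hg (g : guarding) (s : signature) (A : sstruct s) : hypergraph :=
  @HGraph (car A) (guarded g A).

Lemma atom_guarded_hom (s : signature) (A B : sstruct s) (f : car A -> car B) :
  hom f -> forall S, atom_guarded S -> atom_guarded (f @` S).
Proof.
move=> hf S [[a ->]|[R [t [ht ->]]]].
- by left; exists (f a); rewrite image_set1.
- right; exists R, (f \o t); split; first exact: hf.
  by rewrite image_comp.
Qed.

Lemma guarded_hom (g : guarding) (s : signature) (A B : sstruct s) (f : car A -> car B) :
  hom f -> hmor (Hg g A) (Hg g B) f.
Proof.
move=> hf; case: g => S /=.
- exact: atom_guarded_hom.
- move=> [k [gg [hg hsub hpair]]].
  exists k, (fun i => f @` gg i); split.
  + by move=> i; apply: atom_guarded_hom.
  + by move=> i; apply: image_subset.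
  + move=> _ _ [a Sa <-] [b Sb <-]; have [i [ia ib]] := hpair a b Sa Sb.
    by exists i; split; [exists a | exists b].
- move=> [hfin hpair]; split; first exact: finite_image.
  move=> _ _ [a Sa <-] [b Sb <-]; have [G [hG [Ga Gb]]] := hpair a b Sa Sb.
  exists (f @` G); split; first exact: atom_guarded_hom.
  by split; [exists a | exists b].
Qed.

Arguments guarded_hom g {s A B f}.

Lemma guarded_set1 (g : guarding) (s : signature) (A : sstruct s) (a : car A) :
  guarded g A [set a].
Proof.
have ha : atom_guarded [set a] by left; exists a.
case: g => //=.
- exists 1, (fun _ => [set a]); split.
  + by move=> _.
  + by move=> _ x.
  + by move=> x y hx hy; exists ord0; split.
- split; first exact: finite_set1.
  by move=> x y hx hy; exists [set a].
Qed.

Lemma sgl_focussed (g : guarding) (s : signature) (A : sstruct s) (a : car A) :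
  focussed (guarded g A) ([:: [set a]], a).
Proof. split => //= U [<-|//]; exact: guarded_set1. Qed.

Definition GS (g : guarding) (s : signature) (A : sstruct s) : sstruct s :=
  @MkStruct s (Cls (guarded g A))
    (fun R cs => exists (p : seq (set (car A))) (a : 'I_(ar R) -> car A),
        rel a /\ forall i, focussed (guarded g A) (p, a i) /\
                           proj1_sig (cs i) = cls (guarded g A) (p, a i)).

Definition Gmap (g : guarding) (s : signature) (A B : sstruct s) (f : car A -> car B)
  (hf : hom f) : car (GS g A) -> car (GS g B) :=
  cls_map (guarded_hom g hf).

Definition deltaG (g : guarding) (s : signature) (A : sstruct s) :
  car (GS g A) -> car (GS g (GS g A)) :=
  fun S => clsE (deltaplay S) (mkCls (sgl_focussed g (A := GS g A) S)).
Arguments Gmap g {s A B f}.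
Arguments deltaG g {s} A.

(* Main.v *)
Require Import Defs.
From HB Require Import structures.
From mathcomp Require Import all_boot.
From mathcomp Require Import boolp classical_sets functions cardinality.
From Stdlib Require List.

Set Implicit Arguments.
Unset Strict Implicit.
Unset Printing Implicit Defensive.
Local Open Scope classical_set_scope.
Notation pfx := Defs.prefix.

Section Pre.
Variable T : Type.
Implicit Types c p q r d : seq T.

Lemma prefix_refl p : pfx p p.
Proof. by exists [::]; rewrite cats0. Qed.

Lemma prefix_trans p q r : pfx p q -> pfx q r -> pfx p r.
Proof. by move=> [s ->] [t ->]; exists (s ++ t); rewrite catA. Qed.

Lemma prefix_take c p : pfx c p <-> c = take (size c) p.
Proof.
split=> [[s ->]|e]; first by rewrite take_size_cat.
by exists (drop (size c) p); rewrite {1}e cat_take_drop.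
Qed.

Lemma prefix_size c p : pfx c p -> size c <= size p.
Proof. by move=> [s ->]; rewrite size_cat leq_addr. Qed.

Lemma prefix_antisym p q : pfx p q -> pfx q p -> p = q.
Proof.
move=> hpq hqp; have e : size p = size q by apply/eqP; rewrite eqn_leq !prefix_size.
by move/prefix_take: hpq; rewrite e take_size.
Qed.

Lemma prefix_eqsize c p : pfx c p -> size p <= size c -> c = p.
Proof.
move=> h hs; have e := proj1 (prefix_take c p) h.
by rewrite e take_oversize.
Qed.

Lemma prefix_comp (a b l : seq T) : pfx a l -> pfx b l -> pfx a b \/ pfx b a.
Proof.
move=> /prefix_take ha /prefix_take hb.
case: (leqP (size a) (size b)) => h.
- left; apply/prefix_take; by rewrite {1}ha {1}hb take_takel.
- right; apply/prefix_take; by rewrite {1}hb {1}ha take_takel // ltnW.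
Qed.

Lemma prefix_nil p : pfx [::] p.
Proof. by exists p. Qed.

Lemma prefix_nilr p : pfx p [::] -> p = [::].
Proof. by case: p => // x p [s]. Qed.

Lemma prefix_nonnil c p : pfx c p -> c <> [::] -> p <> [::].
Proof. by move=> [s ->]; case: c. Qed.

Lemma In_cat (U : T) p s : List.In U (p ++ s) <-> List.In U p \/ List.In U s.
Proof.
elim: p => [|x p IH] /=; first by split; [right|case].
rewrite IH; tauto.
Qed.

Lemma prefix_In c p U : pfx c p -> List.In U c -> List.In U p.
Proof. by move=> [s ->] h; apply/In_cat; left. Qed.

Lemma meet_ex p q : exists c, is_meet c p q.
Proof.
elim: p q => [|u p IH] q.
  exists [::]; split; [exact: prefix_nil|exact: prefix_nil|].
  by move=> d /prefix_nilr -> _; exact: prefix_nil.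
case: q => [|v q].
  exists [::]; split; [exact: prefix_nil|exact: prefix_nil|].
  by move=> d _ /prefix_nilr -> ; exact: prefix_nil.
case: (pselect (u = v)) => [<-|nuv].
  have [c [h1 h2 h3]] := IH q; exists (u :: c); split.
  - by case: h1 => s ->; exists s.
  - by case: h2 => s ->; exists s.
  - case=> [|w d]; first by move=> *; exact: prefix_nil.
    move=> [s /= [ew ep]] [t /= [_ eq]].
    have [s' hs'] : pfx d c by apply: h3; [exists s|exists t].
    by exists s'; rewrite hs' ew.
exists [::]; split; [exact: prefix_nil|exact: prefix_nil|].
case=> [|w d]; first by move=> *; exact: prefix_nil.
move=> [s /= [ew _]] [t /= [ew2 _]]; exfalso; apply: nuv; by rewrite ew ew2.
Qed.

Lemma meet_uniq c p q : is_meet c p q -> pfx p q -> c = p.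
Proof.
move=> [h1 h2 h3] hpq; apply: prefix_antisym => //.
by apply: h3 => //; exact: prefix_refl.
Qed.

End Pre.

Section Equiv.
Variable V : Type.
Implicit Types x y z : play V.

Lemma equiv_sym x y : play_equiv x y -> play_equiv y x.
Proof.
move=> [e [c [[h1 h2 h3] hc hx hy]]]; split => //; exists c; split => //.
by split => // d a b; apply: h3.
Qed.

Lemma equiv_refl (E : set (set V)) x : focussed E x -> play_equiv x x.
Proof.
case: x => p a [hp _ hl]; split => //; exists p; split => //=.
- by split; [exact: prefix_refl|exact: prefix_refl|].
- by move=> r h1 h2; rewrite -(prefix_antisym h1 h2).
- by move=> r h1 h2; rewrite -(prefix_antisym h1 h2).
Qed.

Lemma equiv_trans x y z : play_equiv x y -> play_equiv y z -> play_equiv x z.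
Proof.
case: x y z => p a [q b] [r e] /=.
move=> [/= eab [c1 [[m1p m1q m1] c1n P1x P1y]]] [/= ebe [c2 [[m2q m2r m2] c2n P2y P2z]]].
simpl in *; subst.
split => //=.
have [c3 [m3p m3r m3]] := meet_ex p r.
case: (prefix_comp m1q m2q) => h12.
- have h13 : pfx c1 c3 by apply: m3 => //; exact: prefix_trans h12 m2r.
  exists c3; split.
  + by split.
  + by move=> E0; apply: c1n; apply: prefix_nilr; rewrite -E0.
  + by move=> r' a1 a2; apply: P1x => //; exact: prefix_trans a1.
  + move=> r' a1 a2; case: (prefix_comp m2r a2) => h.
    * by apply: P2z.
    * by apply: P1y; [exact: prefix_trans a1|exact: prefix_trans m2q].
- have h13 : pfx c2 c3 by apply: m3 => //; exact: prefix_trans h12 m1p.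
  exists c3; split.
  + by split.
  + by move=> E0; apply: c2n; apply: prefix_nilr; rewrite -E0.
  + move=> r' a1 a2; case: (prefix_comp m1p a2) => h.
    * by apply: P1x.
    * by apply: P2y; [exact: prefix_trans a1|exact: prefix_trans m1q].
  + by move=> r' a1 a2; apply: P2z => //; exact: prefix_trans a1.
Qed.

Lemma cls_eq (E : set (set V)) x y : play_equiv x y -> cls E x = cls E y.
Proof.
move=> hxy; apply/seteqP; split => z [fz hz]; split => //.
- exact: equiv_trans (equiv_sym hxy) hz.
- exact: equiv_trans hxy hz.
Qed.

Lemma cls_P (E : set (set V)) x y : focussed E y -> cls E x = cls E y -> play_equiv x y.
Proof.
move=> fy e; have : cls E y y by split => //; exact: equiv_refl fy.
by rewrite -e => -[].
Qed.

Lemma ext_equiv (q1 q2 : seq (set V)) a : pfx q1 q2 -> q1 <> [::] ->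
  (forall r, pfx q1 r -> pfx r q2 -> last set0 r a) -> play_equiv (q1, a) (q2, a).
Proof.
move=> h12 hn hP; split => //; exists q1; split => //=.
- by split => //; exact: prefix_refl.
- by move=> r a1 a2; rewrite -(prefix_antisym a1 a2); apply: hP => //; exact: prefix_refl.
Qed.

End Equiv.

Section Cls.
Variable V : Type.
Variable E : set (set V).

Lemma cls_inj (c c' : Cls E) : proj1_sig c = proj1_sig c' -> c = c'.
Proof.
case: c c' => [S h] [S' h'] /= e; subst S'; congr exist; exact: Prop_irrelevance.
Qed.

Definition Pq (c : Cls E) (q : seq (set V)) :=
  focussed E (q, eps c) /\ proj1_sig c = cls E (q, eps c).

Lemma eps_of (c : Cls E) q a : focussed E (q, a) -> proj1_sig c = cls E (q, a) -> eps c = a.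
Proof.
have [fr hr] := rep_spec c; move=> fq e.
have : cls E (q, a) (rep c) by rewrite -e hr; split => //; exact: equiv_refl fr.
by case=> _ [/= e' _]; rewrite /eps -e'.
Qed.

Lemma P_of (c : Cls E) q a : focussed E (q, a) -> proj1_sig c = cls E (q, a) -> Pq c q.
Proof. by move=> f e; rewrite /Pq (eps_of f e). Qed.

Lemma P_rep (c : Cls E) : Pq c (rep c).1.
Proof. by rewrite /Pq /eps; case: (rep_spec c); case: (rep c). Qed.

Lemma P_equiv (c : Cls E) q1 q2 : Pq c q1 -> Pq c q2 ->
  play_equiv (q1, eps c) (q2, eps c).
Proof. by move=> [f1 e1] [f2 e2]; apply: (cls_P f2); rewrite -e1 -e2. Qed.

Lemma P_down (c : Cls E) q1 q2 : Pq c q2 -> pfx q1 q2 -> q1 <> [::] ->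
  (forall r, pfx q1 r -> pfx r q2 -> last set0 r (eps c)) -> Pq c q1.
Proof.
move=> [[hn hin hl] e] h12 hq1 hP; split; first split => //=.
- by move=> U hU; apply: hin; exact: prefix_In h12 hU.
- by apply: hP => //; exact: prefix_refl.
- by rewrite e; symmetry; apply: cls_eq; apply: ext_equiv.
Qed.

Lemma P_meet (c : Cls E) q1 q2 : Pq c q1 -> Pq c q2 ->
  exists m, [/\ pfx m q1, pfx m q2 & Pq c m].
Proof.
move=> h1 h2; have [_ [m [[hm1 hm2 _] mn P1 P2]]] := P_equiv h1 h2.
exists m; split => //; exact: P_down h1 hm1 mn P1.
Qed.

Lemma P_conv (c : Cls E) q1 r q2 : Pq c q1 -> Pq c q2 -> pfx q1 r -> pfx r q2 -> Pq c r.
Proof.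
move=> h1 h2 h1r hr2; have [_ [m [hm mn P1 P2]]] := P_equiv h1 h2.
have em := meet_uniq hm (prefix_trans h1r hr2).
apply: (P_down h2 hr2).
- by apply: prefix_nonnil h1r _; case: h1 => -[].
- by move=> r' a1 a2; apply: P2 => //; rewrite em; exact: prefix_trans a1.
Qed.

Lemma anchor_ex (c : Cls E) : exists qa, Pq c qa /\ forall q, Pq c q -> pfx qa q.
Proof.
suff: forall n q, size q = n -> Pq c q -> exists qa, Pq c qa /\ forall q, Pq c q -> pfx qa q.
  by move=> /(_ _ _ erefl (P_rep c)).
elim/ltn_ind => n IH q hs hq.
case: (pselect (exists q', Pq c q' /\ ~ pfx q q')) => [[q' [hq' nq]]|nex].
- have [m [m1 m2 hm]] := P_meet hq hq'.
  have lt : size m < n.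
    rewrite -hs ltn_neqAle prefix_size // andbT.
    apply/eqP => es; apply: nq; rewrite -(prefix_eqsize m1) ?es //.
  exact: (IH _ lt m erefl hm).
- exists q; split => // q' h'; case: (pselect (pfx q q')) => // np.
  by exfalso; apply: nex; exists q'.
Qed.

Definition anc (c : Cls E) : seq (set V) := proj1_sig (cid (anchor_ex c)).

Lemma anc_P c : Pq c (anc c).
Proof. by rewrite /anc; case: (cid (anchor_ex c)) => x hx; exact: hx.1. Qed.

Lemma anc_min c q : Pq c q -> pfx (anc c) q.
Proof. by rewrite /anc; case: (cid (anchor_ex c)) => x hx; exact: hx.2. Qed.

Let K := {classic (Cls E)}.

Lemma helly_seq (s : seq K) : s <> [::] ->
  (forall c c' : K, c \in s -> c' \in s -> exists q, Pq c q /\ Pq c' q) ->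
  exists c0 : K, c0 \in s /\ forall c : K, c \in s -> Pq c (anc c0).
Proof.
elim: s => [//|c s IH] _ hpair.
case: (pselect (s = [::])) => [->|sn].
  exists c; split; first by rewrite inE.
  by move=> c'; rewrite inE => /eqP ->; exact: anc_P.
have [c0 [c0s hc0]] : exists c0 : K, c0 \in s /\ forall c : K, c \in s -> Pq c (anc c0).
  by apply: IH => // x y hx hy; apply: hpair; rewrite inE ?hx ?hy orbT.
have hc0in : c0 \in c :: s by rewrite inE c0s orbT.
have [q [hq1 hq2]] := hpair c c0 (mem_head _ _) hc0in.
case: (prefix_comp (anc_min hq2) (anc_min hq1)) => h.
- exists c; split; first exact: mem_head.
  move=> c'; rewrite inE => /orP[/eqP ->|hc']; first exact: anc_P.
  have hc'in : c' \in c :: s by rewrite inE hc' orbT.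
  have [q' [h1 h2]] := hpair c' c hc'in (mem_head _ _).
  apply: (P_conv (anc_P c') h1).
  + exact: prefix_trans (anc_min (hc0 c' hc')) h.
  + exact: anc_min h2.
- exists c0; split; first by [].
  move=> c'; rewrite inE => /orP[/eqP ->|hc']; last exact: hc0.
  exact: P_conv (anc_P c) hq1 h (anc_min hq2).
Qed.

Lemma helly_set (S : set (Cls E)) : finite_set S -> S !=set0 ->
  (forall c c', S c -> S c' -> exists q, Pq c q /\ Pq c' q) ->
  exists q, forall c, S c -> Pq c q.
Proof.
move=> fS [x Sx] hpair.
have [s hs] := (@finite_seqP K S).1 fS.
have hin : forall c : K, S c <-> c \in s by move=> c; rewrite hs.
have hs0 : s <> [::] by move=> e; move: Sx; rewrite hin e.
have hp : forall c c' : K, c \in s -> c' \in s -> exists q, Pq c q /\ Pq c' q.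
  by move=> c c' /hin hc /hin hc'; apply: hpair.
have [c0 [_ h]] := helly_seq hs0 hp.
by exists (anc c0) => c /hin; apply: h.
Qed.

End Cls.

Lemma In_last (T : Type) (x0 : T) (p : seq T) : p <> [::] -> List.In (last x0 p) p.
Proof.
elim: p x0 => [//|u p IH] x0 _ /=; case: p IH => [|v p] IH /=; first by left.
by right; apply: IH.
Qed.

Lemma In_mem (T : eqType) (x : T) s : List.In x s -> x \in s.
Proof.
elim: s => [//|u s IH] /= [->|h]; rewrite inE; first by rewrite eqxx.
by rewrite IH ?orbT.
Qed.

Lemma cls_app (V : Type) (E : set (set V)) p (a : V) U :
  focussed E (p, a) -> E U -> U a -> cls E (p ++ [:: U], a) = cls E (p, a).
Proof.
move=> [hp hin hl] hU Ua; symmetry; apply: cls_eq; apply: ext_equiv => //.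
- by exists [:: U].
- move=> r h1 h2; have s1 := prefix_size h1; have s2 := prefix_size h2.
  rewrite size_cat /= addn1 in s2.
  case: (ltnP (size p) (size r)) => hs.
  + by rewrite (prefix_eqsize h2) ?size_cat ?addn1 // cats1 last_rcons.
  + by rewrite -(prefix_eqsize h1 hs).
Qed.

Lemma focussed_app (V : Type) (E : set (set V)) p (a : V) U :
  p <> [::] -> (forall U, List.In U p -> E U) -> E U -> U a -> focussed E (p ++ [:: U], a).
Proof.
move=> hp hin hU Ua; split => /=.
- by case: p hp hin.
- by move=> W /In_cat [/hin|[<-|]].
- by rewrite cats1 last_rcons.
Qed.

Lemma hedge_of (V : Type) (E : set (set V)) q (W : set V) (T : set (Cls E)) :
  q <> [::] -> (forall U, List.In U q -> E U) -> E W -> W `<=` last set0 q ->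
  T = [set c | exists b, W b /\ proj1_sig c = cls E (q, b)] -> hedgeH E T.
Proof.
move=> hq hin hW sub ->; exists (q ++ [:: W]); split.
- by case: q hq {hin sub}.
- by move=> U /In_cat [/hin|[<-|]].
apply/seteqP; split => c [b [Wb e]]; exists b.
- split; first by rewrite cats1 last_rcons.
  by rewrite e cls_app //; split => //; apply: sub.
- move: Wb e; rewrite cats1 last_rcons -cats1 => Wb e; split => //.
  by rewrite e cls_app //; split => //; apply: sub.
Qed.

Lemma cls_ext (V : Type) (E1 E2 : set (set V)) (x : play V) :
  (forall T, E1 T <-> E2 T) -> cls E1 x = cls E2 x.
Proof.
move=> hE; apply/seteqP; split => y [[h1 h2 h3] h]; split => //; split => // U hU;
  apply/hE; exact: h2.
Qed.

Section Main.
Variables (g : guarding) (s : signature) (A : sstruct s).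
Local Notation E := (guarded g A).

Lemma atom_guarded_guarded (S : set (car A)) : atom_guarded S -> guarded g A S.
Proof.
move=> hS; case: g => //=.
- exists 1, (fun _ => S); split; [by []|by move=> i|by move=> a b Sa Sb; exists ord0].
- split; last by move=> a b Sa Sb; exists S.
  case: hS => [[a ->]|[R [t [_ ->]]]]; first exact: finite_set1.
  exact: finite_image.
Qed.

Lemma eps_mk p b (h : focussed E (p, b)) : eps (mkCls h) = b.
Proof. exact: (@eps_of _ _ (mkCls h) p b h erefl). Qed.

Lemma atom_lift p (W : set (car A)) : p <> [::] -> (forall U, List.In U p -> E U) ->
  W `<=` last set0 p -> atom_guarded W ->
  @atom_guarded s (GS g A) [set c | exists b, W b /\ proj1_sig c = cls E (p, b)].
Proof.
move=> hp hin sub hW; case: hW => [[a ea]|[R [t [rt et]]]]; subst W.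
- have h : focussed E (p, a) by split => //; apply: sub.
  left; exists (mkCls h); apply/seteqP; split => c.
  + by move=> [b [-> e]]; apply: cls_inj.
  + by move=> ->; exists a.
- have h : forall i, focussed E (p, t i) by move=> i; split => //; apply: sub; exact: imageT.
  right; exists R, (fun i => mkCls (h i)); split.
  + by exists p, t; split => // i; split.
  + apply/seteqP; split => c.
    * by move=> [b [[i _ <-] e]]; exists i => //; apply: cls_inj.
    * by move=> [i _ <-]; exists (t i); split => //; exists i.
Qed.

Lemma atom_pair (G : set (car (GS g A))) c c' : @atom_guarded s (GS g A) G -> G c -> G c' ->
  exists q, Pq c q /\ Pq c' q.
Proof.
move=> [[x ->]|[R [cs [[q [t [rt hcs]]] ->]]]].
- by move=> -> ->; exists (rep x).1; split; apply: P_rep.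
- move=> [i _ <-] [j _ <-]; exists q; split.
  + exact: P_of (hcs i).1 (hcs i).2.
  + exact: P_of (hcs j).1 (hcs j).2.
Qed.

Lemma atom_eps (G : set (car (GS g A))) : @atom_guarded s (GS g A) G ->
  atom_guarded (@eps _ E @` G).
Proof.
move=> [[x ->]|[R [cs [[q [t [rt hcs]]] ->]]]].
- by left; exists (eps x); rewrite image_set1.
- right; exists R, t; split => //; apply/seteqP; split.
  + move=> _ [_ [i _ <-] <-]; exists i => //; symmetry; exact: eps_of (hcs i).1 (hcs i).2.
  + move=> _ [i _ <-]; exists (cs i); first by exists i.
    exact: eps_of (hcs i).1 (hcs i).2.
Qed.

Lemma atom_finite (G : set (car (GS g A))) : @atom_guarded s (GS g A) G -> finite_set G.
Proof.
move=> [[x ->]|[R [cs [_ ->]]]]; first exact: finite_set1.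
exact: finite_image.
Qed.

End Main.

Section Main2.
Variables (g : guarding) (s : signature) (A : sstruct s).
Local Notation E := (guarded g A).

Lemma fwd_gen (T : set (Cls E)) : finite_set T ->
  (forall c c', T c -> T c' -> exists q, Pq c q /\ Pq c' q) ->
  E (@eps _ E @` T) -> E set0 -> hedgeH E T.
Proof.
move=> fT hpair hET hE0.
case: (pselect (T !=set0)) => [ne|em].
- have [q hq] := helly_set fT ne hpair.
  have [c0 Tc0] := ne; have [[hqn hin _] _] := hq c0 Tc0.
  apply: (hedge_of (q := q) (W := @eps _ E @` T)) => //.
  + by move=> _ [c Tc <-]; case: (hq c Tc) => -[].
  + apply/seteqP; split => c.
    * move=> Tc; exists (eps c); split; [by exists c | exact: (hq c Tc).2].
    * move=> [b [[c' Tc' <-] e]]; suff -> : c = c' by [].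
      by apply: cls_inj; rewrite e (hq c' Tc').2.
- have -> : T = set0 by apply/seteqP; split => c Tc //; apply: em; exists c.
  apply: (hedge_of (q := [:: set0]) (W := set0)) => //.
  + by move=> U [<-|//].
  + by apply/seteqP; split => c //; move=> [b [[] ]].
Qed.

Lemma fwd_atom (T : set (Cls E)) : @atom_guarded s (GS g A) T -> hedgeH E T.
Proof.
case => [[x ->]|[R [cs [[q [t [rt hcs]]] ->]]]].
- have [[hqn hin hl] e] := P_rep x.
  apply: (hedge_of (q := (rep x).1) (W := [set eps x])) => //.
  + exact: guarded_set1.
  + by move=> _ ->.
  + apply/seteqP; split => c.
    * by move=> ->; exists (eps x); split.
    * by move=> [b [-> e']]; apply: cls_inj; rewrite e' e.
- have hrt : E (range t) by apply: atom_guarded_guarded; right; exists R, t.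
  case: (posnP (ar R)) => [h0|hpos].
  + have noi : forall i : 'I_(ar R), False by case=> i; rewrite h0.
    apply: (hedge_of (q := [:: range t]) (W := range t)) => //.
    * by move=> U [<-|//].
    * apply/seteqP; split => c; first by move=> [i]; case: (noi i).
      by move=> [b [[i] ]]; case: (noi i).
  + have [[hqn hin _] _] := hcs (Ordinal hpos).
    apply: (hedge_of (q := q) (W := range t)) => //.
    * by move=> _ [i _ <-]; case: (hcs i) => -[].
    * apply/seteqP; split => c.
      - by move=> [i _ <-]; exists (t i); split; [exact: imageT | exact: (hcs i).2].
      - by move=> [b [[i _ <-] e]]; exists i => //; apply: cls_inj; rewrite e (hcs i).2.
Qed.

End Main2.

Lemma edges_eq (g : guarding) (s : signature) (A : sstruct s) (T : set (Cls (guarded g A))) :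
  guarded g (GS g A) T <-> hedgeH (guarded g A) T.
Proof.
split.
- case: g T => /= T hT.
  + exact: (fwd_atom (g := Atom)).
  + have [k [gg [hat hsub hpr]]] := hT.
    apply: (fwd_gen (g := Loose)).
    * apply: (sub_finite_set (B := \bigcup_(i in setT) gg i)).
        by move=> c Tc; have [i [h1 _]] := hpr c c Tc Tc; exists i.
      by apply: bigcup_finite => // i _; apply: atom_finite (hat i).
    * by move=> c c' Tc Tc'; have [i [h1 h2]] := hpr c c' Tc Tc'; exact: atom_pair (hat i) h1 h2.
    * exists k, (fun i => @eps _ (guarded Loose A) @` gg i); split.
      - by move=> i; apply: atom_eps.
      - by move=> i; apply: image_subset.
      - move=> _ _ [c Tc <-] [c' Tc' <-]; have [i [h1 h2]] := hpr c c' Tc Tc'.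
        by exists i; split; [exists c|exists c'].
    * exists 0, (fun _ => set0); split; try by case.
      by move=> a b [].
  + have [fT hpr] := hT.
    apply: (fwd_gen (g := Clique)) => //.
    * by move=> c c' Tc Tc'; have [G [hG [h1 h2]]] := hpr c c' Tc Tc'; exact: atom_pair hG h1 h2.
    * split; first exact: finite_image.
      move=> _ _ [c Tc <-] [c' Tc' <-]; have [G [hG [h1 h2]]] := hpr c c' Tc Tc'.
      exists (@eps _ (guarded Clique A) @` G); split; first exact: atom_eps.
      by split; [exists c|exists c'].
- move=> [p [hp hin ->]]; have hU := hin _ (In_last set0 hp).
  clear T; case: g p hp hin hU => /= p hp hin hU.
  + exact: (atom_lift (g := Atom)).
  + have [k [gg [hat hsub hpr]]] := hU.
    exists k, (fun i => [set c | exists b, gg i b /\ proj1_sig c = cls (guarded Loose A) (p, b)]).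
    split.
    * by move=> i; apply: (atom_lift (g := Loose)) => //; apply: hsub.
    * by move=> i c [b [gb e]]; exists b; split => //; apply: hsub i b gb.
    * move=> c c' [b [Ub e]] [b' [Ub' e']]; have [i [h1 h2]] := hpr b b' Ub Ub'.
      by exists i; split; [exists b|exists b'].
  + have [fU hpr] := hU; split.
    * case: (pselect (last set0 p !=set0)) => [[a Ua]|em].
      - have ha : focussed (guarded Clique A) (p, a) by split.
        pose d := mkCls ha.
        refine (@sub_finite_set (Cls (guarded Clique A)) _ ((fun b => clsE (p, b) d) @` last set0 p) _ (finite_image _ fU)).
        move=> c [b [Ub e]]; exists b => //; rewrite /clsE; case: pselect => [h|nh].
          by apply: cls_inj; rewrite e.
        by exfalso; apply: nh; split.
      - apply: (sub_finite_set (B := set0)) => // c [b [Ub _]]; apply: em; by exists b.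
    * move=> c c' [b [Ub e]] [b' [Ub' e']]; have [G [hG [Gb Gb']]] := hpr b b' Ub Ub'.
      have hGE : guarded Clique A G := @atom_guarded_guarded Clique _ _ _ hG.
      exists [set c | exists b, G b /\ proj1_sig c = cls (guarded Clique A) (p ++ [:: G], b)].
      split.
      - apply: (atom_lift (g := Clique)) => //.
        + by move=> ep; apply: hp; move: ep; case: (p).
        + by move=> U /In_cat [/hin|[<-|]].
        + by rewrite cats1 last_rcons.
      - split; [exists b | exists b']; split => //; rewrite cls_app //; split => //.
Qed.

Lemma deltaplay_focussed (V : Type) (E : set (set V)) (c : Cls E) :
  focussed (hedgeH E) (deltaplay c).
Proof.
have [[hp hin hl] hs] := rep_spec c.
rewrite /deltaplay; move: hp hin hl hs; case: (rep c) => p a /= hp hin hl hs.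
have hsz : 0 < size p by case: p hp {hin hl hs}.
split => /=.
- by case: (size p) hsz.
- move=> U /List.in_map_iff [j [<- hj]].
  have := In_mem hj; rewrite mem_iota => /andP[j1 _].
  exists (take j p); split => //.
  + by move: hp j1; case: (p) => // u p' _; case: (j).
  + by move=> W hW; apply: hin; apply: (prefix_In (c := take j p)) => //; exists (drop j p); rewrite cat_take_drop.
- have -> : size p = (size p).-1 + 1 by rewrite addn1 prednK.
  rewrite iotaD map_cat last_cat /= add1n prednK // take_size.
  by exists a.
Qed.

Lemma image_id_map (V : Type) (p : seq (set V)) : map (fun U => id @` U) p = p.
Proof. by elim: p => [//|u p IH] /=; rewrite image_id IH. Qed.

Unset Implicit Arguments.
Set Strict Implicit.

Theorem theorem6p3 (g : guarding) (s : signature) :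
  exists (theta : forall A : sstruct s, hv (Hg g (GS g A)) -> hv (HH (Hg g A)))
         (htheta : forall A : sstruct s, hmor (Hg g (GS g A)) (HH (Hg g A)) (theta A)),
  [/\ (* each component is an isomorphism of hypergraphs *)
      (forall A : sstruct s, exists phi : hv (HH (Hg g A)) -> hv (Hg g (GS g A)),
          [/\ cancel (theta A) phi, cancel phi (theta A) & hmor (HH (Hg g A)) (Hg g (GS g A)) phi]),
      (* naturality: HH(H f) o theta_A = theta_B o H(G f) *)
      (forall (A B : sstruct s) (f : car A -> car B) (hf : hom f),
          Hmap (guarded_hom g hf) \o theta A = theta B \o Gmap g hf),
      (* eps_{HA} o theta_A = H eps_A *)
      (forall A : sstruct s,
          (@eps _ (he (Hg g A))) \o theta A = @eps _ (guarded g A)) &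
      (* delta_{HA} o theta_A = HH theta_A o theta_{GA} o H delta_A *)
      (forall A : sstruct s,
          (@deltaH _ (he (Hg g A))) \o theta A
          = Hmap (htheta A) \o theta (GS g A) \o deltaG g A)].
Proof.
have hth : forall A : sstruct s, hmor (Hg g (GS g A)) (HH (Hg g A)) id.
  by move=> A e he; rewrite image_id; apply/edges_eq.
exists (fun A => id), hth; split.
- move=> A; exists id; split => //.
  by move=> e he; rewrite image_id; apply/edges_eq.
- by [].
- by [].
- move=> A; apply: funext => c /=.
  have hf2 := deltaplay_focussed c.
  have hf1 : focussed (guarded g (GS g A)) (deltaplay c).
    by case: hf2 => h1 h2 h3; split => // U hU; apply/edges_eq; apply: h2.
  apply: cls_inj.
  have -> : proj1_sig (deltaH c) = cls (hedgeH (guarded g A)) (deltaplay c).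
    by rewrite /deltaH /clsE; case: pselect.
  rewrite /Hmap /cls_map /= /mapplay.
  have [_ hr] := rep_spec (deltaG g A c).
  move: hr; case: (rep (deltaG g A c)) => P x /= hr.
  rewrite image_id_map -(cls_ext (P, x) (@edges_eq g s A)) -hr.
  rewrite /deltaG /clsE; case: pselect => //= _.
  by symmetry; apply: cls_ext => T; exact: edges_eq.
Qed.
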